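(* Let $G$ and $H$ be locally compact second countable groups that are coarsely equivalent. Then there are measurable coarse Lipschitz maps $f\colon G\to H$ and $g\colon H\to G$ such that $f\circ g$ and $g\circ f$ are close to the respective identity maps.
   Context: Metrics on $G$ and $H$ are left-invariant proper continuous metrics (these exist and any two are coarsely equivalent). A map $f\colon (X,d_X)\to(Y,d_Y)$ is coarse Lipschitz if there is a non-decreasing $a\colon[0,\infty)\to[0,\infty)$ with $\lim_{t\to\infty}a(t)=\infty$ and $d_Y(f(x),f(x'))\le a(d_X(x,x'))$ for all $x,x'$. Two maps $f,g\colon X\to Y$ are close if $\sup_{x\in X}d_Y(f(x),g(x))<\infty$. A coarse Lipschitz map $f$ is a coarse equivalence if there is a coarse Lipschitz map $g\colon Y\to X$ with $fg$ and $gf$ close to the identity; $G$ and $H$ are coarsely equivalent if such an $f\colon G\to H$ exists. *)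

(* Defs.v *)
From HB Require Import structures.
From mathcomp Require Import all_boot all_order all_algebra.
From mathcomp Require Import monoid.
From mathcomp Require Import all_classical all_reals all_analysis.

Set Implicit Arguments.
Unset Strict Implicit.
Unset Printing Implicit Defensive.

Import Order.TTheory GRing.Theory Num.Theory.
Import numFieldNormedType.Exports.
Local Open Scope classical_set_scope.
Local Open Scope ring_scope.

HB.structure Definition TopGroup := {G of monoid.Group G & Topological G}.
Notation topGroupType := TopGroup.type.

Local Open Scope group_scope.

Definition topological_group (G : topGroupType) : Prop :=
  continuous (fun p : G * G => p.1 * p.2) /\ continuous (fun x : G => x^-1).

Definition lcsc_group (G : topGroupType) : Prop :=
  [/\ topological_group G, hausdorff_space G,
      locally_compact [set: G] & @second_countable G].

Local Close Scope group_scope.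

Definition lip_metric (R : realType) (G : topGroupType) (d : G -> G -> R) : Prop :=
  (forall x y, 0 <= d x y) /\
  (forall x y, d x y = 0 <-> x = y) /\
  (forall x y, d x y = d y x) /\
  (forall x y z, d x z <= d x y + d y z) /\
  (forall x y z, d (z * x)%g (z * y)%g = d x y) /\
  (forall (x : G) (r : R), compact [set y | d x y <= r]) /\
  continuous (fun p : G * G => d p.1 p.2).

Definition coarse_lipschitz (R : realType) (X Y : Type)
    (dX : X -> X -> R) (dY : Y -> Y -> R) (f : X -> Y) : Prop :=
  exists a : R -> R,
    [/\ (forall t, 0 <= t -> 0 <= a t),
        (forall s t, 0 <= s -> s <= t -> a s <= a t),
        (forall M : R, exists T : R, forall t, T <= t -> M <= a t)
      & (forall x x', dY (f x) (f x') <= a (dX x x'))].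

Definition close_maps (R : realType) (X Y : Type) (dY : Y -> Y -> R)
    (f g : X -> Y) : Prop :=
  exists C : R, forall x, dY (f x) (g x) <= C.

Definition coarse_equivalence (R : realType) (X Y : Type)
    (dX : X -> X -> R) (dY : Y -> Y -> R) (f : X -> Y) : Prop :=
  coarse_lipschitz dX dY f /\
  exists g : Y -> X, [/\ coarse_lipschitz dY dX g,
                         close_maps dY (f \o g) id & close_maps dX (g \o f) id].

Definition coarsely_equivalent (R : realType) (X Y : Type)
    (dX : X -> X -> R) (dY : Y -> Y -> R) : Prop :=
  exists f : X -> Y, coarse_equivalence dX dY f.

Definition borel_set (T : topologicalType) : set (set T) := <<s @open T >>.

Definition borel_measurable (T U : topologicalType) (f : T -> U) : Prop :=
  forall B : set U, borel_set B -> borel_set (f @^-1` B).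

(* Main.v *)
Require Import Defs.
From HB Require Import structures.
From mathcomp Require Import all_boot all_order all_algebra.
From mathcomp Require Import monoid.
From mathcomp Require Import all_classical all_reals all_analysis.
From mathcomp Require Import lra.
Set Implicit Arguments. Unset Strict Implicit.
Import Order.TTheory GRing.Theory Num.Theory.
Import numFieldNormedType.Exports.
Local Open Scope classical_set_scope.
Local Open Scope ring_scope.

Lemma cont_right (R : realType) (G : topGroupType) (d : G -> G -> R) :
  continuous (fun p : G * G => d p.1 p.2) -> forall c, continuous (fun y => d y c).
Proof.
move=> dc c x.
apply: (@continuous_comp _ _ _ (fun y : G => (y, c)) (fun p : G * G => d p.1 p.2)); last exact: dc.
apply: cvg_pair; [exact: cvg_id | exact: cvg_cst].
Qed.

Lemma open_ball_lt (R : realType) (G : topGroupType) (d : G -> G -> R) c :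
  continuous (fun p : G * G => d p.1 p.2) -> open [set y | d y c < 1].
Proof.
move=> dc; apply: (@open_comp _ _ (fun y => d y c) [set r : R | r < 1]).
  by move=> y _; exact: cont_right.
exact: open_lt.
Qed.

Section B.
Variable T : topologicalType.
Lemma borel_open (A : set T) : open A -> borel_set A.
Proof. by move=> oA; apply: sub_sigma_algebra. Qed.
Lemma borel_C (A : set T) : borel_set A -> borel_set (~` A).
Proof. by move=> bA; rewrite -setTD; exact: sigma_algebraCD. Qed.
Lemma borel_0 : borel_set (@set0 T).
Proof. exact: sigma_algebra0. Qed.
Lemma borel_bigcup (A : (set T)^nat) : (forall n, borel_set (A n)) -> borel_set (\bigcup_n A n).
Proof. exact: sigma_algebra_bigcup. Qed.
Lemma borel_U (A B : set T) : borel_set A -> borel_set B -> borel_set (A `|` B).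
Proof.
move=> bA bB.
have -> : A `|` B = \bigcup_n (if n is 0%N then A else B).
  apply/seteqP; split=> x.
    by case=> Hx; [exists 0%N | exists 1%N].
  by case=> -[|n] _ /= Hx; [left|right].
by apply: borel_bigcup => -[|n].
Qed.
End B.

Lemma dense_seq (R : realType) (G : topGroupType) (d : G -> G -> R) :
  lcsc_group G -> lip_metric d ->
  exists p : nat -> G, forall x, exists n, d x (p n) < 1.
Proof.
move=> [_ _ _ [B cB [Bo Bb]]] [d0 [dE [dC [dT [_ [_ dc]]]]]].
move/countable_injP: cB => [inj injB].
pose p n := xget (1%g : G) [set y | exists U, [/\ B U, inj U = n & U y]].
exists p => x.
have nN : nbhs x [set y | d y x < 1].
  have hc := @cont_right R G d dc x x.
  apply: (hc [set r : R | r < 1]).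
  rewrite (proj2 (dE x x) erefl); apply: open_nbhs_nbhs; split => //.
  exact: ltr01.
have [U [BU Ux] UN] := Bb x _ nN.
exists (inj U).
have : exists y, exists U', [/\ B U', inj U' = inj U & U' y] by exists x, U.
move/(xgetPex 1%g) => [U' [BU' eU' U'p]].
have UU : U' = U by apply: injB; rewrite ?inE.
by rewrite dC; apply: UN; move: U'p; rewrite UU.
Qed.

Lemma borel_I (T : topologicalType) (A B : set T) :
  borel_set A -> borel_set B -> borel_set (A `&` B).
Proof.
move=> bA bB; rewrite -[A]setCK -[B]setCK -setCU.
by apply: borel_C; apply: borel_U; apply: borel_C.
Qed.

Lemma discretize (R : realType) (G : topGroupType) (d : G -> G -> R) :
  lcsc_group G -> lip_metric d ->
  exists s : G -> G, (forall x, d x (s x) <= 1) /\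
    forall (U : topologicalType) (h : G -> U), borel_measurable (h \o s).
Proof.
move=> lG ld; have [p hp] := dense_seq lG ld.
have dc : continuous (fun p : G * G => d p.1 p.2) by case: ld => _ [_ [_ [_ [_ [_ ?]]]]].
pose idx x := ex_minn (hp x).
have idxE : forall x n, idx x = n <->
    (d x (p n) < 1 /\ forall m, (m < n)%N -> ~ (d x (p m) < 1)).
  move=> x n; rewrite /idx; case: ex_minnP => m Pm minm; split.
    move=> <-; split => // k km Pk.
    by have := minm _ Pk; rewrite leqNgt km.
  move=> [Pn nm]; apply/eqP; rewrite eqn_leq (minm _ Pn) /=.
  by rewrite leqNgt; apply/negP => /nm.
exists (fun x => p (idx x)); split.
  by move=> x; rewrite /idx; case: ex_minnP => m Pm _; exact: ltW.
move=> U h B _.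
pose V n := [set x | d x (p n) < 1] `&`
   ~` (\bigcup_m (if (m < n)%N then [set x | d x (p m) < 1] else set0)).
have VE : forall n, V n = [set x | idx x = n].
  move=> n; apply/seteqP; split => x.
    move=> [Pn nU]; apply/idxE; split => // m mn Pm; apply: nU.
    by exists m => //; rewrite mn.
  move=> /idxE [Pn nm]; split => // -[m _]; case: ifPn => // mn Pm.
  exact: nm mn Pm.
have bV : forall n, borel_set (V n).
  move=> n; apply: borel_I; first by apply: borel_open; exact: open_ball_lt dc.
  apply: borel_C; apply: borel_bigcup => m; case: ifP => _; last exact: borel_0.
  by apply: borel_open; exact: open_ball_lt dc.
have -> : (h \o (fun x => p (idx x))) @^-1` B =
    \bigcup_n (if pselect (B (h (p n))) then V n else set0).
  apply/seteqP; split => x /=.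
    move=> Bx; exists (idx x) => //.
    destruct (pselect (B (h (p (idx x))))) as [b|nB]; last by [].
    by rewrite VE.
  move=> [n _]; destruct (pselect (B (h (p n)))) as [Bn|]; last by [].
  by rewrite VE /= => ->.
apply: borel_bigcup => n; destruct (pselect (B (h (p n)))); [exact: bV | exact: borel_0].
Qed.

Lemma cl_comp_near (R : realType) (X Y : Type) (dX : X -> X -> R) (dY : Y -> Y -> R)
  (s : X -> X) (f : X -> Y) :
  (forall x y, 0 <= dX x y) -> (forall x y, dX x y = dX y x) ->
  (forall x y z, dX x z <= dX x y + dX y z) ->
  (forall x, dX x (s x) <= 1) ->
  coarse_lipschitz dX dY f -> coarse_lipschitz dX dY (f \o s).
Proof.
move=> d0 dC dT ds [a [a0 am ainf ha]].
exists (fun t => a (t + 2)); split.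
- by move=> t t0; apply: a0; rewrite addr_ge0.
- by move=> u v u0 uv; apply: am; rewrite ?lerD2r ?addr_ge0.
- move=> M; have [T hT] := ainf M; exists (T - 2) => t tT; apply: hT.
  by rewrite -lerBlDr.
- move=> x x'; apply: (le_trans (ha _ _)); apply: am => //.
  have h1 := dT (s x) x (s x'); have h2 := dT x x' (s x').
  have := ds x; have := ds x'; rewrite (dC x).
  move: h1 h2; set u := dX (s x) (s x'); set v := dX x x'.
  move=> h1 h2 e1 e2; lra.
Qed.

Lemma close_comp (R : realType) (X Y : Type) (dX : X -> X -> R) (dY : Y -> Y -> R)
  (s : X -> X) (t : Y -> Y) (f : X -> Y) (g : Y -> X) :
  (forall x y, dX x y = dX y x) ->
  (forall x y z, dX x z <= dX x y + dX y z) ->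
  (forall x y, 0 <= dY x y) -> (forall x y, dY x y = dY y x) ->
  (forall x, dX x (s x) <= 1) -> (forall y, dY y (t y) <= 1) ->
  coarse_lipschitz dY dX g -> close_maps dX (g \o f) id ->
  close_maps dX ((g \o t) \o (f \o s)) id.
Proof.
move=> dC dT e0 eC ds dt [b [b0 bm _ hb]] [C hC].
exists (b 1 + C + 1) => x /=.
have h1 := dT (g (t (f (s x)))) (g (f (s x))) x.
have h2 := dT (g (f (s x))) (s x) x.
have h3 : dX (g (t (f (s x)))) (g (f (s x))) <= b 1.
  apply: (le_trans (hb _ _)); apply: bm => //; rewrite eC; exact: dt.
have h4 := hC (s x); rewrite /= in h4.
have h5 := ds x; rewrite dC in h5.
move: h1 h2 h3 h4 h5.
set u := dX _ x; set v := dX (g (f (s x))) x; set w := dX _ (g (f (s x))).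
set z := dX (g (f (s x))) (s x); set q := dX (s x) x.
move=> *; lra.
Qed.

Unset Implicit Arguments. Set Strict Implicit.
Local Close Scope ring_scope. Local Close Scope classical_set_scope.
Theorem lemma4p1 (R : realType) (G H : topGroupType)
    (dG : G -> G -> R) (dH : H -> H -> R) :
  lcsc_group G -> lcsc_group H -> lip_metric dG -> lip_metric dH ->
  coarsely_equivalent dG dH ->
  exists (f : G -> H) (g : H -> G),
    borel_measurable f /\ borel_measurable g /\
    coarse_lipschitz dG dH f /\ coarse_lipschitz dH dG g /\
    close_maps dH (f \o g) id /\ close_maps dG (g \o f) id.
Proof.
move=> lG lH mG mH [f [clf [g [clg cfg cgf]]]].
have [s [ds ms]] := discretize lG mG.
have [t [dt mt]] := discretize lH mH.
case: (mG) => g0 [_ [gC [gT _]]].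
case: (mH) => h0 [_ [hC [hT _]]].
exists (f \o s), (g \o t); split; first exact: ms.
split; first exact: mt.
split; first exact: cl_comp_near.
split; first exact: cl_comp_near.
split; first exact: (close_comp hC hT g0 gC dt ds clf cfg).
exact: (close_comp gC gT h0 hC ds dt clg cgf).
Qed.
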